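(* For every planar forest $F$: (1) $B^+(f_F)=f_{\bullet F}$, where $\bullet F$ is the forest obtained by placing the one-vertex tree $\bullet$ to the left of $F$; (2) $\gamma(f_F)=0$ if $F$ is not a tree, and $\gamma(f_F)=f_{B^-(F)}$ if $F$ is a tree, where $B^-(F)$ is the forest obtained by deleting the root of $F$; (3) $\Delta(f_F)=\sum_{F_1,F_2}f_{F_2}\otimes f_{F_1}$, the sum over all pairs of planar forests $(F_1,F_2)$ with $F_1F_2=F$.
   Context: Let $K$ be a field. Planar rooted trees have their children linearly ordered left to right; a planar forest is a finite, possibly empty, sequence $t_1\cdots t_n$ of planar rooted trees ($1$ = empty forest). $\mathcal{H}$ is the free associative unital $K$-algebra on planar rooted trees, with basis the planar forests and product concatenation, graded by weight (number of vertices). $B^+(F)$ is the tree obtained by grafting the trees of $F$ (in order) on a new common root. $\varepsilon(F)=\delta_{F,1}$. $\Delta$ is the unique linear map with $\Delta(1)=1\otimes1$, $\Delta(xy)=(x\otimes1)\Delta(y)+\Delta(x)(1\otimes y)-x\otimes y$, $\Delta(B^+(x))=B^+(x)\otimes 1+(\mathrm{Id}\otimes B^+)\Delta(x)$. $\gamma:\mathcal{H}\to\mathcal{H}$ is linear with $\gamma(t_1\cdots t_n)=\delta_{t_1,\bullet}t_2\cdots t_n$ ($\bullet$ the one-vertex tree) and $\gamma(1)=0$. $\langle-,-\rangle$ is the unique bilinear form on $\mathcal{H}$ with $\langle1,x\rangle=\varepsilon(x)$, $\langle xy,z\rangle=\langle y\otimes x,\Delta(z)\rangle$ (with $\langle a\otimes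 b,c\otimes d\rangle=\langle a,c\rangle\langle b,d\rangle$) and $\langle B^+(x),y\rangle=\langle x,\gamma(y)\rangle$; it is symmetric, non-degenerate, and forests of different weights are orthogonal. $(f_F)_F$ is the dual basis of the basis of forests: $f_F\in\mathcal{H}$ with $\langle f_F,G\rangle=\delta_{F,G}$ for all planar forests $G$. *)

(* Defs.v *)
From HB Require Import structures.
From mathcomp Require Import all_boot all_algebra.
Set Implicit Arguments. Unset Strict Implicit. Unset Printing Implicit Defensive.
Import GRing.Theory.
Local Open Scope ring_scope.

Inductive tree : Type := Node of seq tree.
(* Planar forests: finite sequences of planar trees; [::] is the empty forest 1. *)
Notation forest := (seq tree).

Fixpoint tree_enc (t : tree) : GenTree.tree unit :=
  let: Node ts := t in GenTree.Node 0 (map tree_enc ts).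
Fixpoint tree_dec (g : GenTree.tree unit) : tree :=
  match g with
  | GenTree.Leaf _ => Node [::]
  | GenTree.Node _ gs => Node (map tree_dec gs)
  end.
Fixpoint tree_encK (t : tree) : tree_dec (tree_enc t) = t :=
  match t return tree_dec (tree_enc t) = t with
  | Node ts => f_equal Node
      ((fix aux (l : seq tree) : map tree_dec (map tree_enc l) = l :=
          match l return map tree_dec (map tree_enc l) = l with
          | [::] => erefl
          | x :: l' => f_equal2 cons (tree_encK x) (aux l')
          end) ts)
  end.
HB.instance Definition _ := Equality.copy tree (can_type tree_encK).

Definition bullet : tree := Node [::].

Section Hopf.
Variable K : fieldType.

(* Elements of H are represented as finite formal K-linear combinations of
   planar forests (lists of (coefficient, forest)); two representations denote
   the same element of H iff all their coefficients agree (heq).  Elements of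
   H (x) H are formal combinations of pairs of forests (F1, F2) = F1 (x) F2. *)
Definition H := seq (K * forest).
Definition H2 := seq (K * (forest * forest)).

Definition coef (x : H) (G : forest) : K := \sum_(p <- x | p.2 == G) p.1.
Definition coef2 (x : H2) (G : forest * forest) : K := \sum_(p <- x | p.2 == G) p.1.
Definition heq (x y : H) : Prop := forall G, coef x G = coef y G.
Definition heq2 (x y : H2) : Prop := forall G, coef2 x G = coef2 y G.

Definition basis (F : forest) : H := [:: (1, F)].
Definition tensor (x y : H) : H2 := [seq (p.1 * q.1, (p.2, q.2)) | p <- x, q <- y].

Definition epsF (F : forest) : K := (F == [::])%:R.

Definition gammaF (F : forest) : H :=
  match F with
  | Node [::] :: G => [:: (1, G)]
  | _ => [::]
  end.

(* Coproduct on basis forests, defined by the recursion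
   Delta(1) = 1(x)1,
   Delta(t G) = (t(x)1) Delta(G) + Delta(t) (1(x)G) - t(x)G,
   Delta(B+(F)) = B+(F)(x)1 + (Id (x) B+) Delta(F). *)
Definition deltaF_gen (dT : tree -> H2) : forest -> H2 :=
  fix dF (F : forest) : H2 :=
    match F with
    | [::] => [:: (1, ([::], [::]))]
    | s :: G =>
        [seq (p.1, (s :: p.2.1, p.2.2)) | p <- dF G]
        ++ [seq (p.1, (p.2.1, p.2.2 ++ G)) | p <- dT s]
        ++ [:: (-1, ([:: s], G))]
    end.
Fixpoint deltaT (t : tree) : H2 :=
  let: Node F := t in
  (1, ([:: t], [::])) ::
  [seq (p.1, (p.2.1, [:: Node p.2.2])) | p <- deltaF_gen deltaT F].
Definition deltaF : forest -> H2 := deltaF_gen deltaT.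

(* The bilinear form on basis forests, defined by recursion on the first
   argument using <1,z> = eps(z), <x y, z> = <y (x) x, Delta z>
   (with x a tree and y a forest), and <B+(x), y> = <x, gamma(y)>. *)
Definition pairF_gen (pT : tree -> forest -> K) : forest -> forest -> K :=
  fix pF (F : forest) (z : forest) : K :=
    match F with
    | [::] => epsF z
    | s :: G =>
        if G is [::] then pT s z
        else \sum_(p <- deltaF z) p.1 * pF G p.2.1 * pT s p.2.2
    end.
Fixpoint pairT (t : tree) (z : forest) : K :=
  let: Node F := t in
  match z with
  | Node [::] :: z' => pairF_gen pairT F z'
  | _ => 0
  end.
Definition pairF : forest -> forest -> K := pairF_gen pairT.

Definition Bplus (x : H) : H := [seq (p.1, [:: Node p.2]) | p <- x].
Definition gamma (x : H) : H :=
  flatten [seq [seq (p.1 * q.1, q.2) | q <- gammaF p.2] | p <- x].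
Definition Delta (x : H) : H2 :=
  flatten [seq [seq (p.1 * q.1, q.2) | q <- deltaF p.2] | p <- x].
Definition pair (x y : H) : K :=
  \sum_(p <- x) \sum_(q <- y) p.1 * q.1 * pairF p.2 q.2.

End Hopf.

(* Main.v *)
Require Import Defs.
From mathcomp Require Import all_boot all_algebra.
Set Implicit Arguments. Unset Strict Implicit. Unset Printing Implicit Defensive.
Import GRing.Theory.
Local Open Scope ring_scope.

Section Ind.
Variable Pr : forest -> Prop.
Hypothesis H0 : Pr [::].
Hypothesis HS : forall X G, Pr X -> Pr G -> Pr (Node X :: G).
Fixpoint forest_ind_aux (t : tree) : forall G, Pr G -> Pr (t :: G) :=
  match t with
  | Node X => fun G HG => @HS X G
      ((fix l (X : forest) : Pr X :=
         match X with [::] => H0 | t' :: X' => forest_ind_aux t' (l X') end) X) HG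
  end.
Lemma forest_ind2 F : Pr F.
Proof. elim: F => // t G IH; exact: forest_ind_aux. Qed.
End Ind.
From mathcomp Require Import ring.

Section S.
Variable K : fieldType.
Definition D (z : forest) (h : forest -> forest -> K) : K :=
  \sum_(p <- deltaF K z) p.1 * h p.2.1 p.2.2.
Definition DT (t : tree) (h : forest -> forest -> K) : K :=
  \sum_(p <- deltaT K t) p.1 * h p.2.1 p.2.2.
Notation P := (pairF K).

Lemma deltaF_cons s G : deltaF K (s :: G) =
  [seq (p.1, (s :: p.2.1, p.2.2)) | p <- deltaF K G]
  ++ [seq (p.1, (p.2.1, p.2.2 ++ G)) | p <- deltaT K s]
  ++ [:: (-1, ([:: s], G))].
Proof. by []. Qed.

Lemma deltaT_node X : deltaT K (Node X) =
  (1, ([:: Node X], [::])) :: [seq (p.1, (p.2.1, [:: Node p.2.2])) | p <- deltaF K X].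
Proof. by []. Qed.

Lemma D_nil h : D [::] h = h [::] [::].
Proof. by rewrite /D /= big_cons big_nil mul1r addr0. Qed.

Lemma D_cons s G h : D (s :: G) h =
  D G (fun a b => h (s :: a) b) + DT s (fun a b => h a (b ++ G)) - h [:: s] G.
Proof.
rewrite /D /DT deltaF_cons !big_cat /= !big_map big_seq1 /= mulN1r addrA.
by [].
Qed.

Lemma DT_node X h : DT (Node X) h = h [:: Node X] [::] + D X (fun a b => h a [:: Node b]).
Proof. by rewrite /DT /D deltaT_node big_cons big_map mul1r. Qed.

Lemma D_ext z h h' : (forall a b, h a b = h' a b) -> D z h = D z h'.
Proof. by move=> E; apply: eq_bigr => p _; rewrite E. Qed.
Lemma DT_ext z h h' : (forall a b, h a b = h' a b) -> DT z h = DT z h'.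
Proof. by move=> E; apply: eq_bigr => p _; rewrite E. Qed.

Lemma D_single s h : D [:: s] h = DT s h.
Proof.
rewrite D_cons D_nil.
rewrite (@DT_ext s _ h); last by move=> a b; rewrite cats0.
by rewrite addrC addKr.
Qed.

Lemma D_add z f g : D z (fun a b => f a b + g a b) = D z f + D z g.
Proof. by rewrite /D -big_split; apply: eq_bigr => p _; rewrite mulrDr. Qed.
Lemma D_opp z f : D z (fun a b => - f a b) = - D z f.
Proof. by rewrite /D -sumrN; apply: eq_bigr => p _; rewrite mulrN. Qed.
Lemma D_sub z f g : D z (fun a b => f a b - g a b) = D z f - D z g.
Proof. by rewrite D_add D_opp. Qed.
Lemma D_scal z c f : D z (fun a b => c * f a b) = c * D z f.
Proof. by rewrite /D mulr_sumr; apply: eq_bigr => p _; rewrite mulrCA. Qed.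
Lemma D_scalr z c f : D z (fun a b => f a b * c) = D z f * c.
Proof. by rewrite /D mulr_suml; apply: eq_bigr => p _; rewrite mulrA. Qed.
Lemma D_zero z : D z (fun _ _ => 0) = 0.
Proof. by rewrite /D big1 // => p _; rewrite mulr0. Qed.
Lemma D_swap x y (k : forest -> forest -> forest -> forest -> K) :
  D x (fun a b => D y (fun c d => k a b c d)) = D y (fun c d => D x (fun a b => k a b c d)).
Proof.
rewrite /D.
under eq_bigr do rewrite mulr_sumr.
rewrite exchange_big /=; apply: eq_bigr => q _.
rewrite mulr_sumr; apply: eq_bigr => p _.
by rewrite mulrCA.
Qed.

Lemma counitR z g : D z (fun a b => (b == [::])%:R * g a) = g z.
Proof.
elim: z g => [|s G IH] g; first by rewrite D_nil mul1r.
rewrite D_cons IH; case: s => X.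
rewrite DT_node.
under D_ext => a b do rewrite /= mul0r.
rewrite D_zero addr0 cat0s.
by rewrite addrK.
Qed.

Lemma counitL z g : D z (fun a b => (a == [::])%:R * g b) = g z.
Proof.
elim/forest_ind2: z g => [|X G IHX IHG] g; first by rewrite D_nil mul1r.
rewrite D_cons.
under D_ext => a b do rewrite /= mul0r.
rewrite D_zero add0r DT_node /= mul0r add0r subr0.
exact: (IHX (fun b => g (Node b :: G))).
Qed.


Lemma D_cat x y h : D (x ++ y) h =
  D y (fun a b => h (x ++ a) b) + D x (fun a b => h a (b ++ y)) - h x y.
Proof.
elim: x h => [|s x IH] h; first by rewrite /= D_nil addrK.
rewrite cat_cons D_cons IH D_cons.
rewrite (@DT_ext s (fun a b => h a (b ++ x ++ y)) (fun a b => h a ((b ++ x) ++ y))); last by move=> a b; rewrite catA.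
rewrite /=. ring.
Qed.

Definition coassoc z := forall h : forest -> forest -> forest -> K,
  D z (fun a b => D a (fun c d => h c d b)) = D z (fun a b => D b (fun c d => h a c d)).

Lemma coassoc_node X : coassoc X -> coassoc [:: Node X].
Proof.
move=> IH h; rewrite !D_single !DT_node D_single DT_node D_nil.
under [in RHS]D_ext => a b do rewrite D_single DT_node.
rewrite D_add -IH; ring.
Qed.

Lemma coassoc_cat x y : coassoc x -> coassoc y -> coassoc (x ++ y).
Proof.
move=> Hx Hy h.
rewrite D_cat [in RHS]D_cat.
have E1 : D y (fun a b => D (x ++ a) (fun c d => h c d b)) =
  D y (fun a b => D a (fun c d => h (x ++ c) d b) + D x (fun c d => h c (d ++ a) b) - h x a b).
  by apply: D_ext => a b; rewrite D_cat.
have E2 : D x (fun a b => D (b ++ y) (fun c d => h a c d)) =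
  D x (fun a b => D y (fun c d => h a (b ++ c) d) + D b (fun c d => h a c (d ++ y)) - h a b y).
  by apply: D_ext => a b; rewrite D_cat.
rewrite E1 E2 !D_sub !D_add.
rewrite (Hy (fun c d e => h (x ++ c) d e)) (Hx (fun c d e => h c d (e ++ y))).
rewrite (D_swap x y (fun a b c d => h a (b ++ c) d)).
ring.
Qed.

Lemma coassocP z : coassoc z.
Proof.
elim/forest_ind2: z => [|X G IHX IHG]; first by move=> h; rewrite !D_nil.
exact: (coassoc_cat (coassoc_node IHX) IHG).
Qed.


Lemma P_nil z : P [::] z = (z == [::])%:R.
Proof. by []. Qed.
Lemma P_tree X z : P [:: Node X] z =
  match z with Node [::] :: z' => P X z' | _ => 0 end.
Proof. by []. Qed.

Lemma P_cons s G z : P (s :: G) z = D z (fun a b => P G a * P [:: s] b).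
Proof.
case: G => [|g G].
  by rewrite (@D_ext z _ (fun a b => (a == [::])%:R * P [:: s] b)) ?counitL.
by rewrite /D; apply: eq_bigr => p _; rewrite mulrA.
Qed.

Lemma P_cat x y z : P (x ++ y) z = D z (fun a b => P y a * P x b).
Proof.
elim: x z => [|s x IH] z.
  by rewrite cat0s -{1}(counitR z (P y)); apply: D_ext => a b; rewrite P_nil mulrC.
rewrite cat_cons P_cons.
transitivity (D z (fun a b => D a (fun c d => P y c * P x d * P [:: s] b))).
  by apply: D_ext => a b; rewrite IH D_scalr.
rewrite (coassocP z (fun c d e => P y c * P x d * P [:: s] e)).
apply: D_ext => a b; rewrite P_cons -D_scal; apply: D_ext => c d; ring.
Qed.

Definition Spr z := forall x y, P z (x ++ y) = D z (fun a b => P a y * P b x).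

Lemma S_nil : Spr [::].
Proof. by move=> x y; rewrite D_nil !P_nil; case: x => [|? ?]; case: y => [|? ?]; rewrite /= ?mul1r ?mulr0 ?mul0r. Qed.

Lemma S_node X : Spr X -> Spr [:: Node X].
Proof.
move=> SX x y; rewrite D_single DT_node.
case: x => [|t x].
  rewrite P_nil mulr1 cat0s (@D_ext X _ (fun _ _ => 0)) ?D_zero ?addr0 //.
  by move=> a b; rewrite P_tree mulr0.
rewrite P_nil mulr0 add0r cat_cons P_tree.
case: t => [[|u T]].
  by rewrite SX; apply: D_ext.
by rewrite (@D_ext X _ (fun _ _ => 0)) ?D_zero // => a b; rewrite P_tree mulr0.
Qed.

Lemma S_cat u v : Spr u -> Spr v -> Spr (u ++ v).
Proof.
move=> Su Sv x y.
rewrite P_cat D_cat [in RHS]D_cat.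
have T1 : D y (fun a b => P v (x ++ a) * P u b) = D v (fun c d => P (u ++ c) y * P d x).
  transitivity (D y (fun a b => D v (fun c d => P c a * P d x * P u b))).
    by apply: D_ext => a b; rewrite Sv D_scalr.
  rewrite (D_swap y v (fun a b c d => P c a * P d x * P u b)).
  apply: D_ext => c d; rewrite P_cat -D_scalr; apply: D_ext => a b; ring.
have T2 : D x (fun a b => P v a * P u (b ++ y)) = D u (fun c d => P c y * P (d ++ v) x).
  transitivity (D x (fun a b => D u (fun c d => P v a * (P c y * P d b)))).
    by apply: D_ext => a b; rewrite Su D_scal.
  rewrite (D_swap x u (fun a b c d => P v a * (P c y * P d b))).
  apply: D_ext => c d; rewrite P_cat -D_scal; apply: D_ext => a b; ring.
rewrite T1 T2; ring.
Qed.

Lemma S_all z : Spr z.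
Proof.
elim/forest_ind2: z => [|X G IHX IHG]; first exact: S_nil.
exact: (S_cat (S_node IHX) IHG).
Qed.

Lemma P_z_nil z : P z [::] = (z == [::])%:R.
Proof. case: z => [|s G] //; by rewrite P_cons D_nil; case: s => S; rewrite mulr0. Qed.

Lemma P_nodes S b : P [:: Node S] [:: Node b] = ((S == [::]) && (b == [::]))%:R.
Proof. case: b => [|u b]. rewrite andbT -P_z_nil. by []. by rewrite andbF. Qed.

Lemma P3T z X : P z [:: Node X] =
  match z with Node [::] :: z' => P z' X | _ => 0 end.
Proof.
case: z => [|[S] G] //.
rewrite P_cons D_single DT_node.
rewrite (_ : P [:: Node S] [::] = 0) ?mulr0 ?add0r; last by case: S.
under D_ext => a b do rewrite P_nodes.
case: S => [|u S].
  rewrite -(counitR X (P G)); apply: D_ext => a b; rewrite mulrC; by [].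
by rewrite (@D_ext X _ (fun _ _ => 0)) ?D_zero // => a b; rewrite mulr0.
Qed.

Lemma P_sym x z : P x z = P z x.
Proof.
elim/forest_ind2: x z => [|X G IHX IHG] z; first by rewrite P_nil P_z_nil.
rewrite -cat1s P_cat S_all; apply: D_ext => a b.
rewrite IHG P3T P_tree; congr (_ * _).
by case: b => [|[[|u T]] b] //; rewrite IHX.
Qed.

End S.

Section Main.
Variable K : fieldType.
Notation P := (pairF K).
Definition Ix (x : H K) (g : forest -> K) : K := \sum_(p <- x) p.1 * g p.2.
Definition I2 (L : H2 K) (h : forest -> forest -> K) : K := \sum_(p <- L) p.1 * h p.2.1 p.2.2.

Lemma Ix_ext x g g' : (forall a, g a = g' a) -> Ix x g = Ix x g'.
Proof. by move=> E; apply: eq_bigr => p _; rewrite E. Qed.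
Lemma I2_ext x g g' : (forall a b, g a b = g' a b) -> I2 x g = I2 x g'.
Proof. by move=> E; apply: eq_bigr => p _; rewrite E. Qed.
Lemma Ix_scal x c g : c * Ix x g = Ix x (fun a => c * g a).
Proof. by rewrite /Ix mulr_sumr; apply: eq_bigr => p _; rewrite mulrCA. Qed.
Lemma Ix_scalr x c g : Ix x g * c = Ix x (fun a => g a * c).
Proof. by rewrite /Ix mulr_suml; apply: eq_bigr => p _; rewrite mulrA. Qed.
Lemma Ix_swap x y (k : forest -> forest -> K) :
  Ix x (fun a => Ix y (fun b => k a b)) = Ix y (fun b => Ix x (fun a => k a b)).
Proof.
rewrite /Ix; under eq_bigr do rewrite mulr_sumr.
rewrite exchange_big /=; apply: eq_bigr => q _.
by rewrite mulr_sumr; apply: eq_bigr => p _; rewrite mulrCA.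
Qed.
Lemma I2_swap L y (k : forest -> forest -> forest -> K) :
  I2 L (fun a b => Ix y (fun c => k a b c)) = Ix y (fun c => I2 L (fun a b => k a b c)).
Proof.
rewrite /Ix /I2; under eq_bigr do rewrite mulr_sumr.
rewrite exchange_big /=; apply: eq_bigr => q _.
by rewrite mulr_sumr; apply: eq_bigr => p _; rewrite mulrCA.
Qed.

Lemma pair_basis x G : pair x (basis K G) = Ix x (fun H => P H G).
Proof. by apply: eq_bigr => p _; rewrite big_seq1 mulr1. Qed.

Lemma coef_Ix x G : coef x G = Ix x (fun H => (H == G)%:R).
Proof.
rewrite /coef big_mkcond; apply: eq_bigr => p _.
by case: eqP => _; rewrite ?mulr1 ?mulr0.
Qed.

Lemma coef2_I2 L G1 G2 : coef2 L (G1, G2) = I2 L (fun a b => (a == G1)%:R * (b == G2)%:R).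
Proof.
rewrite /coef2 big_mkcond; apply: eq_bigr => [[c [a b]]] _ /=.
by rewrite xpair_eqE; case: eqP => _; case: eqP => _; rewrite ?mulr1 ?mulr0.
Qed.

Variable f : forest -> H K.
Hypothesis hf : forall F G : forest, pair (f F) (basis K G) = (F == G)%:R.

Lemma hf' F G : Ix (f F) (fun H => P H G) = (F == G)%:R.
Proof. by rewrite -pair_basis hf. Qed.

Lemma delta_f H0 G : (H0 == G)%:R = Ix (f G) (fun K0 => P H0 K0).
Proof. by rewrite eq_sym -hf'; apply: Ix_ext => a; rewrite P_sym. Qed.

Lemma nondeg x y : (forall K0, Ix x (fun H => P H K0) = Ix y (fun H => P H K0)) -> heq x y.
Proof.
move=> E G.
have key z : coef z G = Ix (f G) (fun K0 => Ix z (fun H => P H K0)).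
  rewrite coef_Ix -Ix_swap; apply: Ix_ext => a; exact: delta_f.
by rewrite !key; apply: Ix_ext.
Qed.

Lemma nondeg2 L L' :
  (forall K1 K2, I2 L (fun a b => P a K1 * P b K2) = I2 L' (fun a b => P a K1 * P b K2)) ->
  heq2 L L'.
Proof.
move=> E [G1 G2].
have key z : coef2 z (G1, G2) =
   Ix (f G1) (fun K1 => Ix (f G2) (fun K2 => I2 z (fun a b => P a K1 * P b K2))).
  rewrite coef2_I2.
  transitivity (I2 z (fun a b => Ix (f G1) (fun K1 => Ix (f G2) (fun K2 => P a K1 * P b K2)))).
    apply: I2_ext => a b; rewrite !delta_f Ix_scalr; apply: Ix_ext => K1.
    by rewrite Ix_scal.
  rewrite I2_swap; apply: Ix_ext => K1; exact: I2_swap.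
by rewrite !key; apply: Ix_ext => K1; apply: Ix_ext => K2.
Qed.

Lemma Ix_gamma x g : Ix (gamma x) g = Ix x (fun H => Ix (gammaF K H) g).
Proof.
rewrite /Ix /gamma big_flatten big_map; apply: eq_bigr => p _.
rewrite big_map mulr_sumr; apply: eq_bigr => q _; by rewrite mulrA.
Qed.

Lemma I2_Delta x h : I2 (Delta x) h = Ix x (fun H => D H h).
Proof.
rewrite /I2 /Ix /Delta big_flatten big_map; apply: eq_bigr => p _.
rewrite big_map /D mulr_sumr; apply: eq_bigr => q _; by rewrite mulrA.
Qed.

Lemma I2_tensor u v g1 g2 : I2 (tensor u v) (fun a b => g1 a * g2 b) = Ix u g1 * Ix v g2.
Proof.
rewrite /I2 /tensor big_allpairs_dep /Ix mulr_suml; apply: eq_bigr => p _.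
rewrite mulr_sumr; apply: eq_bigr => q _ /=. ring.
Qed.

Lemma term_eq (F K1 K2 : forest) i : (i <= size F)%N ->
  ((drop i F == K1) && (take i F == K2)) = (i == size K2) && (F == K2 ++ K1).
Proof.
move=> le.
apply/andP/andP => [[/eqP d /eqP t]|[/eqP -> /eqP ->]].
  split; last by rewrite -d -t cat_take_drop.
  by rewrite -t size_takel.
by rewrite drop_size_cat // take_size_cat.
Qed.

Lemma comb (F K1 K2 : forest) :
  \sum_(i <- iota 0 (size F).+1) ((drop i F == K1)%:R * (take i F == K2)%:R : K)
  = (F == K2 ++ K1)%:R.
Proof.
rewrite big_seq.
under eq_bigr => i.
  rewrite mem_iota add0n ltnS => /= le.
  rewrite -natrM mulnb term_eq //.
  over.
rewrite -big_seq.
case: eqVneq => [eF|_].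
  rewrite (bigD1_seq (size K2)) ?iota_uniq //; last first.
    by rewrite mem_iota add0n ltnS eF size_cat leq_addr.
  rewrite eqxx andbT big1; first exact: addr0.
  by move=> i /negbTE ->.
by rewrite big1 // => i _; rewrite andbF.
Qed.

Theorem main (F : forest) :
  heq (Bplus (f F)) (f (bullet :: F))
  /\ ((forall t : tree, F <> [:: t]) -> heq (gamma (f F)) [::])
  /\ (forall F' : forest, F = [:: Node F'] -> heq (gamma (f F)) (f F'))
  /\ heq2 (Delta (f F))
       (flatten [seq tensor (f (drop i F)) (f (take i F)) | i <- iota 0 (size F).+1]).
Proof.
have G1 K0 : Ix (gamma (f F)) (fun H => P H K0) = (F == [:: Node K0])%:R.
  rewrite Ix_gamma -hf'; apply: Ix_ext => H0; rewrite P3T.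
  case: H0 => [|[[|u T]] G] /=; rewrite /Ix ?big_nil //.
  by rewrite big_cons big_nil mul1r addr0.
split; [|split; [|split]].
- apply: nondeg => K0.
  rewrite hf' /Ix big_map /=.
  transitivity (Ix (f F) (fun H => P [:: Node H] K0)) => //.
  under Ix_ext => H0 do rewrite P_tree.
  case: K0 => [|[[|u T]] z] /=.
  - by rewrite /Ix big1 // => p _; rewrite mulr0.
  - exact: hf'.
  - rewrite /Ix big1; last by move=> p _; rewrite mulr0.
    by rewrite eqseq_cons (_ : (bullet == Node (u :: T)) = false) //; apply/eqP.
- move=> nt; apply: nondeg => K0; rewrite G1 /Ix big_nil.
  by case: eqP => // E; case: (nt _ E).
- move=> F' eF; apply: nondeg => K0; rewrite G1 hf' eF.
  have -> : ([:: Node F'] == [:: Node K0]) = (F' == K0) by apply/eqP/eqP => [[]|->].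
  by [].
- apply: nondeg2 => K1 K2.
  rewrite I2_Delta.
  transitivity (Ix (f F) (fun H => P H (K2 ++ K1))).
    by apply: Ix_ext => H0; rewrite S_all.
  rewrite hf' /I2 big_flatten big_map -(comb F K1 K2).
  apply: eq_bigr => i _.
  by rewrite -!hf' -I2_tensor.
Qed.

End Main.
Unset Implicit Arguments.
Set Strict Implicit.

Theorem proposition21 (K : fieldType) (f : forest -> H K)
  (hf : forall F G : forest, pair (f F) (basis K G) = (F == G)%:R)
  (F : forest) :
  heq (Bplus (f F)) (f (bullet :: F))
  /\ ((forall t : tree, F <> [:: t]) -> heq (gamma (f F)) [::])
  /\ (forall F' : forest, F = [:: Node F'] -> heq (gamma (f F)) (f F'))
  /\ heq2 (Delta (f F))
       (flatten [seq tensor (f (drop i F)) (f (take i F)) | i <- iota 0 (size F).+1]).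
Proof. exact: main. Qed.
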